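(* Let $L,L'$ be finite simplicial complexes, $\varphi: L\to L'$ a bijective simplicial finite-fibration, and $n\ge2$. Then $$\mathrm{scat}(\varphi)\le\mathrm{scat}(L)\le\mathrm{TC}(\varphi)\le\min\{\mathrm{TC}(L),\mathrm{TC}_n(\varphi)\}\le\mathrm{TC}_n(L).$$
   Context: Simplicial complexes are abstract and edge-path connected; $K^n$ is the $n$-fold categorical product and $K\times K'$ the categorical product (vertices are tuples of vertices; a set of vertices is a simplex iff each coordinate projection is a simplex). Simplicial maps $f,g: K\to K'$ are contiguous if $f(\sigma)\cup g(\sigma)$ is a simplex for every simplex $\sigma$; $f\sim g$ if joined by a finite chain of contiguous simplicial maps. $\mathrm{SD}(\varphi_1,\dots,\varphi_m)$ for simplicial maps $K\to K'$ is the least $k\ge0$ such that $K$ is a union of subcomplexes $K_0,\dots,K_k$ with $\varphi_i|_{K_j}\sim\varphi_l|_{K_j}$ for all $i,l,j$. With $p_i: L^n\to L$ the projections: $\mathrm{TC}_n(L)=\mathrm{SD}(p_1,\dots,p_n)$, $\mathrm{TC}(L)=\mathrm{TC}_2(L)$, $\mathrm{TC}_n(\varphi)=\mathrm{SD}(\varphi\circ p_1,\dots,\varphi\circ p_n)$. For a vertex $v_0$ of $L$ and constant map $c_{v_0}: L\to L$: $\mathrm{scat}(L)=\mathrm{SD}(1_L,c_{v_0})$, $\mathrm{scat}(\varphi)=\mathrm{SD}(\varphi,\varphi\circ c_{v_0})$. $I_m$ is the complex with vertices $0,\dots,m$ and edges $\{i,i+1\}$; $\varphi$ is a simplicial finite-fibration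 if for every finite complex $N$, $m\ge1$, inclusion $i: N\times\{0\}\to N\times I_m$ and simplicial $g: N\times\{0\}\to L$, $G: N\times I_m\to L'$ with $\varphi\circ g=G\circ i$, there is simplicial $\widetilde G$ with $\widetilde G\circ i=g$, $\varphi\circ\widetilde G=G$. $\mathrm{TC}(\varphi)$ is the simplicial Schwarz genus of $\pi_\varphi: L^I\to L\times L'$, $\delta\mapsto(\delta(0),\varphi(\delta(1)))$, where $L^I$ is the simplicial path complex of $L$; the simplicial Schwarz genus of $p: E\to B$ is the least $k\ge0$ such that $B$ is a union of subcomplexes $B_0,\dots,B_k$ each admitting a simplicial $s: B_j\to E$ with $p\circ s$ the inclusion. *)

(* Defs.v *)
From Stdlib Require Import ClassicalEpsilon Relations.
From mathcomp Require Import all_boot.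

Record complex := Complex {
  vtx : Type;
  simplex : (vtx -> Prop) -> Prop }.

Definition nonemptyS {V : Type} (S : V -> Prop) := exists x, S x.
Definition finiteS {V : Type} (S : V -> Prop) :=
  exists l : list V, forall x, S x -> List.In x l.
Definition img {A B : Type} (f : A -> B) (S : A -> Prop) : B -> Prop :=
  fun y => exists x, S x /\ f x = y.
Definition sing {V : Type} (v : V) : V -> Prop := fun x => x = v.
Definition unionS {V : Type} (A B : V -> Prop) : V -> Prop :=
  fun x => A x \/ B x.

Definition is_complex (K : complex) : Prop :=
  (forall S, simplex K S -> nonemptyS S /\ finiteS S) /\
  (forall S T, simplex K S -> nonemptyS T -> (forall x, T x -> S x) ->
               simplex K T) /\
  (forall v : vtx K, simplex K (sing v)).

Definition finite_complex (K : complex) : Prop :=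
  is_complex K /\ exists l : list (vtx K), forall v, List.In v l.

Definition connected (K : complex) : Prop :=
  forall u v : vtx K,
    clos_refl_trans (vtx K) (fun a b => simplex K (fun x => x = a \/ x = b)) u v.

Definition prodc (K K' : complex) : complex :=
  @Complex (vtx K * vtx K')
    (fun S => nonemptyS S /\ simplex K (img fst S) /\ simplex K' (img snd S)).

Definition powc (K : complex) (n : nat) : complex :=
  @Complex ('I_n -> vtx K)
    (fun S => nonemptyS S /\ forall i : 'I_n, simplex K (img (fun t => t i) S)).

Definition Icx (m : nat) : complex :=
  @Complex 'I_m.+1
    (fun S => nonemptyS S /\
       exists i : nat, forall x : 'I_m.+1, S x -> nat_of_ord x = i \/ nat_of_ord x = i.+1).

(* Simplicial path complex L^I: direct limit of the L^{I_m} along the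
   inclusions "repeat the last vertex".  A vertex is a simplicial path
   gamma : I_oo -> L which is eventually constant; a finite nonempty set of
   paths is a simplex iff for every edge {i,i+1} of I_oo the union of the
   images is a simplex of L (i.e. it is a simplex of some L^{I_m}). *)
Definition spath (L : complex) :=
  {g : nat -> vtx L |
     (exists m, forall i, m <= i -> g i = g m) /\
     (forall i, simplex L (fun x => x = g i \/ x = g i.+1))}.

Definition pathc (L : complex) : complex :=
  @Complex (spath L)
    (fun S => nonemptyS S /\ finiteS S /\
       forall i : nat,
         simplex L (fun x => exists d : spath L,
                       S d /\ (x = proj1_sig d i \/ x = proj1_sig d i.+1))).

Definition pstart (L : complex) (d : spath L) : vtx L := proj1_sig d 0.
(* the end point delta(1): the eventual value of the path *)
Definition pend (L : complex) (d : spath L) : vtx L :=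
  proj1_sig d
    (proj1_sig (constructive_indefinite_description _ (proj1 (proj2_sig d)))).

Definition simplicial (K K' : complex) (f : vtx K -> vtx K') : Prop :=
  forall S, simplex K S -> simplex K' (img f S).

Definition subcomplex (K : complex) (P : (vtx K -> Prop) -> Prop) : Prop :=
  (forall S, P S -> simplex K S) /\
  (forall S T, P S -> nonemptyS T -> (forall x, T x -> S x) -> P T).

Definition simplicial_on (K K' : complex) (P : (vtx K -> Prop) -> Prop)
  (f : vtx K -> vtx K') : Prop :=
  forall S, P S -> simplex K' (img f S).

Definition contiguous_on (K K' : complex) (P : (vtx K -> Prop) -> Prop)
  (f g : vtx K -> vtx K') : Prop :=
  simplicial_on K K' P f /\ simplicial_on K K' P g /\
  forall S, P S -> simplex K' (unionS (img f S) (img g S)).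

Definition homotopic_on (K K' : complex) (P : (vtx K -> Prop) -> Prop)
  (f g : vtx K -> vtx K') : Prop :=
  clos_refl_trans (vtx K -> vtx K') (contiguous_on K K' P) f g.

(* Extended naturals (None = infinity) and "least k such that P k".   *)
Definition enat := option nat.
Definition ole (a b : enat) : Prop :=
  match a, b with
  | _, None => True
  | None, Some _ => False
  | Some x, Some y => x <= y
  end.
Definition omin (a b : enat) : enat :=
  match a, b with
  | None, _ => b
  | _, None => a
  | Some x, Some y => Some (minn x y)
  end.

Definition least (P : nat -> Prop) : enat :=
  match excluded_middle_informative (exists k, P k) with
  | left _ => Some (epsilon (inhabits 0%N) (fun k => P k /\ forall j, P j -> k <= j))
  | right _ => None
  end.

Definition SD_cover (K K' : complex) (I : Type) (fs : I -> vtx K -> vtx K')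
  (k : nat) : Prop :=
  exists Ks : 'I_k.+1 -> (vtx K -> Prop) -> Prop,
    (forall j, subcomplex K (Ks j)) /\
    (forall S, simplex K S -> exists j, Ks j S) /\
    (forall (i l : I) (j : 'I_k.+1), homotopic_on K K' (Ks j) (fs i) (fs l)).

Definition SD (K K' : complex) (I : Type) (fs : I -> vtx K -> vtx K') : enat :=
  least (SD_cover K K' I fs).

Definition TCn (L : complex) (n : nat) : enat :=
  @SD (powc L n) L 'I_n (fun i t => t i).
Definition TC (L : complex) : enat := TCn L 2.
Definition TCn_map (L L' : complex) (phi : vtx L -> vtx L') (n : nat) : enat :=
  @SD (powc L n) L' 'I_n (fun i t => phi (t i)).
Definition scat (L : complex) (v0 : vtx L) : enat :=
  @SD L L bool (fun b => if b then id else fun _ => v0).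
Definition scat_map (L L' : complex) (phi : vtx L -> vtx L') (v0 : vtx L) : enat :=
  @SD L L' bool (fun b => if b then phi else fun _ => phi v0).

Definition genus_cover (E B : complex) (p : vtx E -> vtx B) (k : nat) : Prop :=
  exists Bs : 'I_k.+1 -> (vtx B -> Prop) -> Prop,
    (forall j, subcomplex B (Bs j)) /\
    (forall S, simplex B S -> exists j, Bs j S) /\
    (forall j, exists s : vtx B -> vtx E,
        simplicial_on B E (Bs j) s /\
        forall v, Bs j (sing v) -> p (s v) = v).

Definition genus (E B : complex) (p : vtx E -> vtx B) : enat := least (genus_cover E B p).

Definition piphi (L L' : complex) (phi : vtx L -> vtx L') (d : vtx (pathc L)) :
  vtx (prodc L L') := (pstart L d, phi (pend L d)).

Definition TC_map (L L' : complex) (phi : vtx L -> vtx L') : enat :=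
  genus (pathc L) (prodc L L') (piphi L L' phi).

(* Simplicial finite-fibration (N x {0} identified with N, i(v) = (v,0)). *)
Definition finite_fibration (L L' : complex) (phi : vtx L -> vtx L') : Prop :=
  forall (N : complex) (m : nat), finite_complex N -> 0 < m ->
  forall (g : vtx N -> vtx L) (G : vtx N * 'I_m.+1 -> vtx L'),
    simplicial N L g -> simplicial (prodc N (Icx m)) L' G ->
    (forall v, phi (g v) = G (v, ord0)) ->
    exists Gt : vtx N * 'I_m.+1 -> vtx L,
      simplicial (prodc N (Icx m)) L Gt /\
      (forall v, Gt (v, ord0) = g v) /\
      (forall w, phi (Gt w) = G w).

(* Main.v *)
Require Import Defs.
From mathcomp Require Import all_boot.
From Stdlib Require Import Classical ClassicalEpsilon Relations FunctionalExtensionality PropExtensionality.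

Lemma seteq {V} (A B : V -> Prop) : (forall x, A x <-> B x) -> A = B.
Proof. move=> H; apply: functional_extensionality => x; apply: propositional_extensionality; exact: H. Qed.

Lemma sub_simplex (K : complex) : is_complex K -> forall S T, simplex K S -> nonemptyS T -> (forall x, T x -> S x) -> simplex K T.
Proof. by case=> _ [H _]. Qed.

Lemma least_min (P : nat -> Prop) k : P k -> exists m, P m /\ forall j, P j -> m <= j.
Proof.
elim/ltn_ind: k => k IH Pk.
case: (classic (exists j, j < k /\ P j)) => [[j [ljk Pj]]|H]; first exact: IH j ljk Pj.
exists k; split=>// j Pj; rewrite leqNgt; apply/negP => ljk; apply: H; by exists j.
Qed.

Lemma least_le (P : nat -> Prop) k : P k -> ole (least P) (Some k).
Proof.
move=> Pk; rewrite /least; case: excluded_middle_informative => [Hex|Hn]; last by exfalso; apply: Hn; exists k.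
have [m Hm] := least_min _ _ Pk.
case: (epsilon_spec (inhabits 0) (fun k => P k /\ forall j, P j -> k <= j) (ex_intro _ m Hm)) => _ H /=.
exact: H.
Qed.

Lemma least_some P k : least P = Some k -> P k.
Proof. rewrite /least; case: excluded_middle_informative => // [[k0 Pk0]] [<-].
have [m Hm] := least_min _ _ Pk0. by case: (epsilon_spec (inhabits 0) (fun k => P k /\ forall j, P j -> k <= j) (ex_intro _ m Hm)). Qed.

Lemma least_mono (P Q : nat -> Prop) : (forall k, P k -> Q k) -> ole (least Q) (least P).
Proof. move=> H; case E: (least P) => [k|]; last by case: (least Q). apply: least_le; apply: H; exact: least_some _ _ E. Qed.

Lemma ole_omin_r a b c : ole b c -> ole (omin a b) c.
Proof. case: a b c => [x|] [y|] [z|] //=. move=> H; exact: leq_trans (geq_minr x y) H. Qed.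

Lemma ole_omin t a b : ole t a -> ole t b -> ole t (omin a b).
Proof. case: t a b => [x|] [y|] [z|] //=. move=> H1 H2; by rewrite leq_min H1 H2. Qed.

Lemma img_comp {A B C} (h : B -> C) (f : A -> B) S : img (fun x => h (f x)) S = img h (img f S).
Proof. apply: seteq => c; split.
 - case=> a [Sa <-]. exists (f a); split=>//; by exists a.
 - case=> b [[a [Sa <-]] <-]. by exists a.
Qed.

Lemma img_union {A B} (h : A -> B) S T : img h (unionS S T) = unionS (img h S) (img h T).
Proof. apply: seteq => c; split.
 - case=> a [[Sa|Ta] <-]; [left|right]; by exists a.
 - case=> [[a [Sa <-]]|[a [Ta <-]]]; exists a; split=>//; [left|right]; done.
Qed.

Lemma contig_comp K K' K'' P f g h : contiguous_on K K' P f g -> simplicial K' K'' h ->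
  contiguous_on K K'' P (fun x => h (f x)) (fun x => h (g x)).
Proof. move=> [Hf [Hg Hu]] Hh; split; [|split] => S PS.
 - rewrite (img_comp h f); exact: Hh _ (Hf S PS).
 - rewrite (img_comp h g); exact: Hh _ (Hg S PS).
 - rewrite (img_comp h f) (img_comp h g) -img_union; exact: Hh _ (Hu S PS).
Qed.

Lemma homot_comp K K' K'' P f g h : homotopic_on K K' P f g -> simplicial K' K'' h ->
  homotopic_on K K'' P (fun x => h (f x)) (fun x => h (g x)).
Proof. move=> H Hh; elim: H => [x y Hxy|x|x y z _ IH1 _ IH2].
 - apply: rt_step; exact: contig_comp.
 - exact: rt_refl.
 - exact: rt_trans IH1 IH2.
Qed.

Lemma part1 L L' phi v0 : simplicial L L' phi -> ole (scat_map L L' phi v0) (scat L v0).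
Proof. move=> Hphi; apply: least_mono => k [Ks [Hs [Hc Hh]]]; exists Ks; split=>//; split=>// i l j.
  move: (homot_comp _ _ _ _ _ _ phi (Hh i l j) Hphi). by case: i; case: l => H; exact: H.
Qed.

Lemma part4 L L' phi n : simplicial L L' phi -> ole (TCn_map L L' phi n) (TCn L n).
Proof. move=> Hphi; apply: least_mono => k [Ks [Hs [Hc Hh]]]; exists Ks; split=>//; split=>// i l j.
 exact: (homot_comp _ _ _ _ _ _ phi (Hh i l j) Hphi). Qed.

Lemma contig_sym K K' P f g : contiguous_on K K' P f g -> contiguous_on K K' P g f.
Proof. move=> [Hf [Hg Hu]]; split=>//; split=>// S PS.
 have -> : unionS (img g S) (img f S) = unionS (img f S) (img g S) by apply: seteq => x; rewrite /unionS; tauto.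
 exact: Hu. Qed.

Lemma homot_sym K K' P f g : homotopic_on K K' P f g -> homotopic_on K K' P g f.
Proof. elim => [x y H|x|x y z _ IH1 _ IH2]; [apply: rt_step; exact: contig_sym| exact: rt_refl| exact: rt_trans IH2 IH1]. Qed.

Lemma contig_eq K K' P f g : simplicial_on K K' P f -> (forall S, P S -> forall x, S x -> f x = g x) -> contiguous_on K K' P f g.
Proof. move=> Hf Heq.
 have E : forall S, P S -> img g S = img f S.
  move=> S PS; apply: seteq => y; split; case=> x [Sx <-]; exists x; split=>//; by rewrite (Heq S PS x Sx).
 split=>//; split=> S PS; first by rewrite E //; exact: Hf.
 rewrite E // (_ : unionS _ _ = img f S); first exact: Hf.
 apply: seteq => y; rewrite /unionS; tauto.
Qed.

Definition mc (L : complex) (d : spath L) : nat := proj1_sig (constructive_indefinite_description _ (proj1 (proj2_sig d))).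
Lemma mcP L d i : mc L d <= i -> proj1_sig d i = pend L d.
Proof. rewrite /mc /pend. case: constructive_indefinite_description => m Hm /=. exact: Hm. Qed.

Lemma le_foldr_max {A} (f : A -> nat) (l : seq A) a : List.In a l -> f a <= foldr (fun x acc => maxn (f x) acc) 0 l.
Proof. elim: l => //= b l IH [<-|H]; first exact: leq_maxl. exact: leq_trans (IH H) (leq_maxr _ _). Qed.

Lemma part2 L L' phi v0 : finite_complex L -> finite_complex L' -> injective phi ->
  ole (scat L v0) (TC_map L L' phi).
Proof.
move=> [HL [l Hl]] [HL' _] Hinj; apply: least_mono => k [Bs [Hsub [Hcov Hsec]]].
pose T (S : vtx L -> Prop) := fun p : vtx L * vtx L' => S p.1 /\ p.2 = phi v0.
exists (fun j S => simplex L S /\ Bs j (T S)).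
have Tsimp : forall S, simplex L S -> simplex (prodc L L') (T S).
  move=> S HS; have [[x Sx] _] := proj1 HL S HS.
  split; first by exists (x, phi v0).
  split.
  - apply: (sub_simplex _ HL _ _ HS); first by exists x; exists (x, phi v0).
    by move=> y [[a b] [[Sa _] <-]].
  - apply: (sub_simplex _ HL' (sing (phi v0))); [exact: (proj2 (proj2 HL')) | by exists (phi v0); exists (x, phi v0) | ].
    by move=> y [[a b] [[_ ->] <-]].
split; [|split].
- move=> j; split; first by move=> S [].
  move=> S S' [HS HB] Hne Hsub'. split; first exact: sub_simplex HL _ _ HS Hne Hsub'.
  apply: (proj2 (Hsub j) _ _ HB).
   + case: Hne => x Hx; by exists (x, phi v0).
   + move=> [a b] [Ha Hb]; split=>//; exact: Hsub'.
- move=> S HS; have [j Hj] := Hcov _ (Tsimp S HS); by exists j.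
- move=> b1 b2 j.
  have [s [Hs Hps]] := Hsec j.
  pose H i := fun a => proj1_sig (s (a, phi v0)) i.
  pose M := foldr (fun x acc => maxn (mc L (s (x, phi v0))) acc) 0 l.
  have Hsing : forall S, simplex L S /\ Bs j (T S) -> forall a, S a -> Bs j (sing (a, phi v0)).
    move=> S [HS HB] a Sa; apply: (proj2 (Hsub j) _ _ HB); first by exists (a, phi v0).
    by move=> p ->; split.
  have Hpi : forall S, simplex L S /\ Bs j (T S) -> forall a, S a -> piphi L L' phi (s (a, phi v0)) = (a, phi v0).
    move=> S PS a Sa; exact: Hps _ (Hsing S PS a Sa).
  have HX : forall i S, simplex L S /\ Bs j (T S) -> simplex L (unionS (img (H i) S) (img (H i.+1) S)).
    move=> i S PS; have := Hs _ (proj2 PS); case=> _ [_ /(_ i) Hi].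
    apply: (sub_simplex _ HL _ _ Hi).
    + have [[x Sx] _] := proj1 HL S (proj1 PS); exists (H i x); left; by exists x.
    + move=> y [[a [Sa <-]]|[a [Sa <-]]]; exists (s (a, phi v0)); (split; first by exists (a, phi v0)); [left|right]; done.
  have Hsimp : forall i, simplicial_on L L (fun S => simplex L S /\ Bs j (T S)) (H i).
    move=> i S PS; apply: (sub_simplex _ HL _ _ (HX i S PS)).
    + have [[x Sx] _] := proj1 HL S (proj1 PS); exists (H i x); by exists x.
    + move=> y Hy; by left.
  have Hcontig : forall i, contiguous_on L L (fun S => simplex L S /\ Bs j (T S)) (H i) (H i.+1).
    move=> i; split; first exact: Hsimp. split; first exact: Hsimp. exact: HX.
  have Hchain : forall m, homotopic_on L L (fun S => simplex L S /\ Bs j (T S)) (H 0) (H m).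
    elim=> [|m IH]; first exact: rt_refl. exact: rt_trans IH (rt_step _ _ _ _ (Hcontig m)).
  have Hid : homotopic_on L L (fun S => simplex L S /\ Bs j (T S)) id (fun _ => v0).
    apply: (rt_trans _ _ _ (H 0)).
    - apply: rt_step; apply: contig_eq.
      + move=> S PS; apply: (sub_simplex _ HL _ _ (proj1 PS)).
        * have [[x Sx] _] := proj1 HL S (proj1 PS); exists x; by exists x.
        * by move=> y [x [Sx <-]].
      + move=> S PS x Sx; have := congr1 fst (Hpi S PS x Sx); rewrite /= /pstart => E.
        by rewrite /H E.
    - apply: (rt_trans _ _ _ (H M)); first exact: Hchain.
      apply: rt_step; apply: contig_sym; apply: contig_eq.
      + move=> S PS; apply: (sub_simplex _ HL (sing v0)); first exact: (proj2 (proj2 HL)).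
        * have [[x Sx] _] := proj1 HL S (proj1 PS); exists v0; by exists x.
        * by move=> y [x [Sx <-]].
      + move=> S PS x Sx; have := congr1 snd (Hpi S PS x Sx); rewrite /= => /Hinj E.
        rewrite /H mcP; first by rewrite E.
        exact: (le_foldr_max (fun x => mc L (s (x, phi v0))) l x (Hl x)).
  case: b1; case: b2 => /=; [exact: rt_refl | exact: Hid | exact: homot_sym Hid | exact: rt_refl].
Qed.

Definition emb (L L' : complex) (psi : vtx L' -> vtx L) n (v : vtx L * vtx L') : 'I_n -> vtx L :=
  fun i => if nat_of_ord i == 0 then v.1 else psi v.2.

Lemma prod_finite L L' S : is_complex L -> is_complex L' -> simplex (prodc L L') S -> finiteS S.
Proof. move=> HL HL' [_ [H1 H2]].
 have [_ [l1 F1]] := proj1 HL _ H1. have [_ [l2 F2]] := proj1 HL' _ H2.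
 exists (List.list_prod l1 l2) => [[a b] Sab]; apply: List.in_prod; [apply: F1; by exists (a,b) | apply: F2; by exists (a,b)].
Qed.

Lemma section_lemma (L L' K : complex) (phi : vtx L -> vtx L') (e : vtx L * vtx L' -> vtx K)
  (P : (vtx K -> Prop) -> Prop) (F : nat -> vtx K -> vtx L) (r : nat) :
  is_complex L -> is_complex L' ->
  (forall S T, P S -> nonemptyS T -> (forall x, T x -> S x) -> P T) ->
  (forall i, contiguous_on K L P (F i) (F i.+1)) ->
  (forall i, r <= i -> F i = F r) ->
  (forall v, F 0 (e v) = v.1) -> (forall v, phi (F r (e v)) = v.2) ->
  exists s : vtx (prodc L L') -> vtx (pathc L),
    simplicial_on (prodc L L') (pathc L) (fun S => simplex (prodc L L') S /\ P (img e S)) s /\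
    forall v, simplex (prodc L L') (sing v) /\ P (img e (sing v)) -> piphi L L' phi (s v) = v.
Proof.
move=> HL HL' HP Hc Hr H0 H1.
pose g v i := if excluded_middle_informative (P (sing (e v))) then F i (e v) else v.1.
have gE : forall v, P (sing (e v)) -> forall i, g v i = F i (e v).
  by move=> v Hv i; rewrite /g; case: excluded_middle_informative.
have gP : forall v, (exists m, forall i, m <= i -> g v i = g v m) /\ (forall i, simplex L (fun x => x = g v i \/ x = g v i.+1)).
  move=> v; rewrite /g; case: excluded_middle_informative => Hv.
  - split; first by exists r => i /Hr ->.
    move=> i; have [_ [_ Hu]] := Hc i; have := Hu _ Hv.
    move/(sub_simplex _ HL); apply; first by exists (F i (e v)); left.
    move=> x [->|->]; [left|right]; by exists (e v).
  - split; first by exists 0.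
    move=> i; apply: (sub_simplex _ HL (sing v.1)); [exact: (proj2 (proj2 HL)) | by exists v.1; left | by move=> x [->|->]].
pose s v : spath L := exist _ (g v) (gP v).
have HsE : forall v, P (sing (e v)) -> forall i, proj1_sig (s v) i = F i (e v).
  move=> v Hv i; exact: gE.
have Hsing : forall S, P (img e S) -> forall v, S v -> P (sing (e v)).
  move=> S PS v Sv; apply: (HP _ _ PS); first by exists (e v).
  move=> x ->; by exists v.
exists s; split.
- move=> S [HS PS]; have [w Sw] := proj1 HS.
  split; first by exists (s w); exists w.
  split.
  + have [ls Hls] := prod_finite _ _ _ HL HL' HS.
    exists (List.map s ls) => d [v [Sv <-]]; apply: List.in_map; exact: Hls.
  + move=> i; have [_ [_ Hu]] := Hc i; have := Hu _ PS.
    move/(sub_simplex _ HL); apply.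
    * exists (proj1_sig (s w) i); exists (s w); split; last by left.
      by exists w.
    * move=> x [d [[v [Sv <-]] Hx]]; rewrite !(HsE v (Hsing S PS v Sv)) in Hx.
      case: Hx => ->; [left|right]; exists (e v); split=>//; by exists v.
- move=> [a b] [HS PS]; have Hv := Hsing _ PS (a, b) erefl.
  have Hpend : pend L (s (a,b)) = F r (e (a,b)).
    by rewrite -(mcP L (s (a,b)) (maxn (mc L (s (a,b))) r)) ?leq_maxl // HsE // (Hr _ (leq_maxr _ _)).
  by rewrite /piphi Hpend H1 /pstart HsE // H0.
Qed.

Lemma emb_simplicial L L' psi n : is_complex L -> is_complex L' -> simplicial L' L psi ->
  forall S, simplex (prodc L L') S -> simplex (powc L n) (img (emb L L' psi n) S).
Proof. move=> HL HL' Hpsi S [[v Sv] [H1 H2]]; split; first by exists (emb L L' psi n v); exists v.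
 move=> i. case E: (nat_of_ord i == 0).
 - apply: (sub_simplex _ HL _ _ H1).
   + exists v.1; exists (emb L L' psi n v); split; first by exists v. by rewrite /emb E.
   + move=> x [t [[w [Sw <-]] <-]]; rewrite /emb E; by exists w.
 - apply: (sub_simplex _ HL _ _ (Hpsi _ H2)).
   + exists (psi v.2); exists (emb L L' psi n v); split; first by exists v. by rewrite /emb E.
   + move=> x [t [[w [Sw <-]] <-]]; rewrite /emb E. exists w.2; split=>//; by exists w.
Qed.

Lemma genus_from L L' phi psi n k (Ks : 'I_k.+1 -> (vtx (powc L n) -> Prop) -> Prop) :
  is_complex L -> is_complex L' -> simplicial L' L psi ->
  (forall j, subcomplex (powc L n) (Ks j)) -> (forall S, simplex (powc L n) S -> exists j, Ks j S) ->
  (forall j, exists F r, (forall i, contiguous_on (powc L n) L (Ks j) (F i) (F i.+1)) /\ (forall i, r <= i -> F i = F r) /\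
      (forall v, F 0 (emb L L' psi n v) = v.1) /\ (forall v, phi (F r (emb L L' psi n v)) = v.2)) ->
  genus_cover (pathc L) (prodc L L') (piphi L L' phi) k.
Proof.
 move=> HL HL' Hpsi Hsub Hcov Hch.
 exists (fun j S => simplex (prodc L L') S /\ Ks j (img (emb L L' psi n) S)).
 split; [|split].
 - move=> j; split; first by move=> S [].
   move=> S T [HS HK] Hne Hts; split.
   + case: HS => _ [H1 H2]; split=>//; split.
     * apply: (sub_simplex _ HL _ _ H1).
       - case: Hne => w Tw; exists w.1; by exists w.
       - move=> x [w [Tw <-]]; exists w; split=>//; exact: Hts.
     * apply: (sub_simplex _ HL' _ _ H2).
       - case: Hne => w Tw; exists w.2; by exists w.
       - move=> x [w [Tw <-]]; exists w; split=>//; exact: Hts.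
   + apply: (proj2 (Hsub j) _ _ HK).
     * case: Hne => w Tw; exists (emb L L' psi n w); by exists w.
     * move=> x [w [Tw <-]]; exists w; split=>//; exact: Hts.
 - move=> S HS; have [j Hj] := Hcov _ (emb_simplicial L L' psi n HL HL' Hpsi S HS); by exists j.
 - move=> j; have [F [r [Hc [Hr [H0 H1]]]]] := Hch j.
   have [s [Hs Hp]] := section_lemma L L' (powc L n) phi (emb L L' psi n) (Ks j) F r HL HL' (proj2 (Hsub j)) Hc Hr H0 H1.
   by exists s; split.
Qed.

Lemma chain K K' P f g : homotopic_on K K' P f g -> simplicial_on K K' P g ->
  exists F r, F 0 = f /\ F r = g /\ (forall i, r <= i -> F i = g) /\ forall i, contiguous_on K K' P (F i) (F i.+1).
Proof.
 move=> H; elim: (clos_rt_rt1n _ _ _ _ H) => [x|x y z Hxy _ IH] Hg.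
 - exists (fun _ => x), 0; split=>//; split=>//; split=>// i. by apply: contig_eq.
 - have [F [r [F0 [Fr [Fge Fc]]]]] := IH Hg.
   exists (fun i => if i is i'.+1 then F i' else x), r.+1; split=>//; split=>//; split.
   + by case=> // i Hi; apply: Fge.
   + case=> [|i] /=; by rewrite ?F0.
Qed.

Lemma part3a L L' phi psi : is_complex L -> is_complex L' -> simplicial L' L psi -> cancel psi phi ->
  ole (TC_map L L' phi) (TC L).
Proof.
 move=> HL HL' Hpsi Hpp; apply: least_mono => k [Ks [Hsub [Hcov Hh]]].
 apply: (genus_from L L' phi psi 2 k Ks) => // j.
 have Hs1 : simplicial_on (powc L 2) L (Ks j) ((fun (i : 'I_2) (t : 'I_2 -> vtx L) => t i) (@Ordinal 2 1 isT)).
   move=> S /(proj1 (Hsub j)) [_ H]; exact: H.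
 have [F [r [F0 [Fr [Fge Fc]]]]] := chain _ _ _ _ _ (Hh (@Ordinal 2 0 isT) (@Ordinal 2 1 isT) j) Hs1.
 exists F, r; split=>//; split; first by move=> i Hi; rewrite (Fge i Hi) Fr.
 split=> v; first by rewrite F0.
 by rewrite Fr /= /emb /=.
Qed.

Lemma part3b L L' phi psi n : is_complex L -> is_complex L' -> simplicial L L' phi -> simplicial L' L psi ->
  cancel phi psi -> cancel psi phi -> 2 <= n ->
  ole (TC_map L L' phi) (TCn_map L L' phi n).
Proof.
 move=> HL HL' Hphi Hpsi Hc1 Hc2 Hn; apply: least_mono => k [Ks [Hsub [Hcov Hh]]].
 apply: (genus_from L L' phi psi n k Ks) => // j.
 pose i0 := @Ordinal n 0 (leq_trans (isT : 0 < 2) Hn).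
 pose i1 := @Ordinal n 1 Hn.
 have H := homot_comp _ _ _ _ _ _ psi (Hh i0 i1 j) Hpsi.
 have Hs1 : simplicial_on (powc L n) L (Ks j) (fun x => psi ((fun (i : 'I_n) (t : 'I_n -> vtx L) => phi (t i)) i1 x)).
   move=> S /(proj1 (Hsub j)) [_ HS].
   rewrite (img_comp psi (fun x => phi (x i1))) (img_comp phi (fun x => x i1)).
   exact: Hpsi _ (Hphi _ (HS i1)).
 have [F [r [F0 [Fr [Fge Fc]]]]] := chain _ _ _ _ _ H Hs1.
 exists F, r; split=>//; split; first by move=> i Hi; rewrite (Fge i Hi) Fr.
 split=> v; first by rewrite F0 /= /emb /= Hc1.
 by rewrite Fr /= /emb /= !Hc2.
Qed.

Lemma inv_simplicial L L' phi psi : finite_complex L -> finite_complex L' -> simplicial L L' phi ->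
  cancel phi psi -> cancel psi phi -> finite_fibration L L' phi -> simplicial L' L psi.
Proof.
 move=> [HL _] [HL' [l' Hl']] Hphi Hc1 Hc2 Hfib sig Hsig.
 have [[b0 Hb0] [ls Hls]] := proj1 HL' _ Hsig.
 pose N := @Complex (vtx L') (fun S => nonemptyS S /\ ((forall x, S x -> sig x) \/ exists v, forall x, S x -> x = v)).
 have HN : finite_complex N.
   split; last by exists l'.
   split; [|split].
   - move=> S [Hne [Hs|[v Hv]]]; split=>//.
     + exists ls => x /Hs /Hls //.
     + exists [:: v] => x /Hv ->; by left.
   - move=> S T [_ [Hs|[v Hv]]] HneT Hts; split=>//; [left => x /Hts /Hs // | right; exists v => x /Hts /Hv //].
   - move=> v; split; [by exists v | right; by exists v].
 pose g := fun _ : vtx N => psi b0.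
 pose G := fun p : vtx N * 'I_2 => if nat_of_ord p.2 == 0 then b0 else if excluded_middle_informative (sig p.1) then p.1 else b0.
 have Hg : simplicial N L g.
   move=> S [[x Sx] _]; apply: (sub_simplex _ HL (sing (psi b0))); [exact: (proj2 (proj2 HL)) | by exists (psi b0); exists x | by move=> y [z [_ <-]]].
 have HG : simplicial (prodc N (Icx 1)) L' G.
   move=> S [[p Sp] _]; apply: (sub_simplex _ HL' _ _ Hsig); first by exists (G p); exists p.
   move=> y [q [_ <-]]; rewrite /G; case: (_ == 0) => //; by case: excluded_middle_informative.
 have [Gt [HGt [HGt0 HGt1]]] := Hfib N 1 HN isT g G Hg HG (fun v => Hc2 b0).
 pose T := fun p : vtx N * 'I_2 => sig p.1 /\ nat_of_ord p.2 = 1.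
 have HT : simplex (prodc N (Icx 1)) T.
   split; first by exists (b0, ord_max).
   split.
   - split; first by exists b0; exists (b0, ord_max).
     left => x [[a i] [[Ha _] <-]]. exact Ha.
   - split; first by exists ord_max; exists (b0, ord_max).
     exists 0 => x _; case: x => [[|[|m]] Hm]; [by left|by right|by []].
 have := HGt _ HT.
 have -> : img Gt T = img psi sig; last done.
 apply: seteq => y; split.
 - case=> [[a i] [[Ha Hi] <-]]; exists a; split=>//.
   have := HGt1 (a, i); rewrite /G /= Hi /=. case: excluded_middle_informative => // Hsa E.
   apply: (can_inj Hc1); by rewrite E Hc2.
 - case=> a [Ha <-]; exists (a, ord_max); split; first done.
   have := HGt1 (a, ord_max); rewrite /G /=; case: excluded_middle_informative => // Hsa E.
   apply: (can_inj Hc1); by rewrite E Hc2.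
Qed.

Theorem theorem6p4 (L L' : complex) (phi : vtx L -> vtx L') (n : nat)
  (v0 : vtx L) :
  finite_complex L -> finite_complex L' -> connected L -> connected L' ->
  simplicial L L' phi -> bijective phi -> finite_fibration L L' phi -> 2 <= n ->
  ole (scat_map L L' phi v0) (scat L v0) /\
  ole (scat L v0) (TC_map L L' phi) /\
  ole (TC_map L L' phi) (omin (TC L) (TCn_map L L' phi n)) /\
  ole (omin (TC L) (TCn_map L L' phi n)) (TCn L n).
Proof.
 move=> HLf HL'f _ _ Hphi [psi Hc1 Hc2] Hfib Hn.
 have HL := proj1 HLf. have HL' := proj1 HL'f.
 have Hpsi := inv_simplicial L L' phi psi HLf HL'f Hphi Hc1 Hc2 Hfib.
 split; first exact: part1.
 split; first exact: (part2 L L' phi v0 HLf HL'f (can_inj Hc1)).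
 split; first by apply: ole_omin; [exact: (part3a L L' phi psi HL HL' Hpsi Hc2) | exact: (part3b L L' phi psi n HL HL' Hphi Hpsi Hc1 Hc2 Hn)].
 apply: ole_omin_r; exact: part4.
Qed.
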